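(* Let $\mathcal{M}$ be a set of mappings over a schema $\Sigma$, $\mathcal{D}$ a database instance of $\Sigma$, and $q(\vec x)\leftarrow L_1(\vec v_1),\dots,L_n(\vec v_n)$ a conjunctive query. If the answer template matrix $\mathrm{atm}(\mathrm{unf}(q(\vec x),\mathrm{wrap}(\mathcal{M})))$ does not contain repeated rows, then $$|\mathrm{unf}(q(\vec x),\mathcal{M})^{\mathcal{D}}|=\sum_{q_u\in\mathrm{unf}(q,\mathrm{wrap}(\mathcal{M}))}|q_u(\vec x)^{\mathcal{D}}|.$$
   Context: A mapping is $L(\vec f(\vec x))\leftsquigarrow V(\vec x)$ with $L$ a concept or role name, $\vec f(\vec x)$ a tuple of terms each of the form $g(\vec y)$ ($g$ a function symbol, $\vec y\subseteq\vec x$), and $V$ a view name with extension $V^{\mathcal{D}}$ given by a query over $\Sigma$. Signature: $\mathrm{sign}(m)=(L,\vec f)$. Unfolding of a CQ $q(\vec x)\leftarrow L_1(\vec v_1),\dots,L_n(\vec v_n)$: the non-recursive Datalog query $(q_{\mathrm{unf}}(\vec x),\Pi)$ where $\Pi$ is a minimal (up to renaming) set of rules containing, for every tuple $(m_1,\dots,m_n)$ of mappings with $m_i=L_i(\vec f_i(\vec x_i))\leftsquigarrow V_i(\vec z_i)$ and every mgu $\sigma$ of $\{(L_i(\vec v_i),L_i(\vec f_i(\vec x_i)))\}$, the rule $q_{\mathrm{unf}}(\sigma(\vec x))\leftarrow V_1(\sigma(\vec z_1)),\dots,V_n(\sigma(\vec z_n))$; the sum ranges over these rules viewed as CQs $q_u$.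 Wrap: for each signature $(L,\vec f)$, the mappings of that signature $\{L(\vec f(\vec v_i))\leftsquigarrow V_i(\vec v_i)\}_i$ are replaced by the single mapping $L(\vec f(\vec v))\leftsquigarrow W(\vec v)$ with $W$ a fresh view for $(W(\vec v),\{W(\vec v_i)\leftarrow V_i(\vec v_i)\}_i)$; $\mathrm{wrap}(\mathcal{M})$ is the union over all signatures. Answer template matrix: if the rules of an unfolding are $q_{\mathrm{unf}}(\vec f_j(\vec y_j))\leftarrow V^j_1,\dots,V^j_n$ for $1\le j\le m$, where $\vec f_j$ is the tuple of function symbols occurring in the head, then $\mathrm{atm}(q_{\mathrm{unf}})$ is the matrix whose rows are $\vec f_1,\dots,\vec f_m$. *)

(* Defs.v *)
From mathcomp Require Import all_boot.
From Stdlib Require List.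
Set Implicit Arguments.
Unset Strict Implicit.
Unset Printing Implicit Defensive.

(*   Lname : eqType  -- concept and role names                         *)
(*   F     : eqType  -- function symbols                               *)
(*   Vname : Type    -- view names                                     *)
(*   C     : Type    -- constants of the database                      *)

(* Variables of unfolded rules: (0, x) is the query variable x; (i.+1, y)
   is the variable y of the i-th mapping of a tuple (renaming apart). *)
Definition var := (nat * nat)%type.

Inductive term (F : Type) :=
| TVar (v : var)
| TFun (g : F) (args : seq (term F)).
Arguments TVar {F} v.

Fixpoint subst (F : Type) (s : var -> term F) (t : term F) : term F :=
  match t with
  | TVar v => s v
  | TFun g ts => TFun g (map (subst s) ts)
  end.

(* A mapping  L(g_1(y_1),...,g_k(y_k)) ~> V(z)  with view of type VT;
   mapping variables are natural numbers. *)
Record mapping (Lname F VT : Type) := Mapping {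
  mL  : Lname;
  mts : seq (F * seq nat);
  mV  : VT;
  mzs : seq nat
}.

Record cq (Lname : Type) := CQ {
  qhead : seq nat;
  qbody : seq (Lname * seq nat)
}.

Record rule (F VT : Type) := Rule {
  rhead : seq (term F);
  rbody : seq (VT * seq (term F))
}.

Section Unfolding.
Variables (Lname F VT : Type).

Definition qterm (v : nat) : term F := TVar (0, v).
Definition mterm (i : nat) (p : F * seq nat) : term F :=
  TFun p.1 (map (fun y => TVar (i.+1, y)) p.2).

Definition unifier (q : cq Lname) (ms : seq (mapping Lname F VT))
    (s : var -> term F) : Prop :=
  size ms = size (qbody q) /\
  forall i L vs m,
    List.nth_error (qbody q) i = Some (L, vs) ->
    List.nth_error ms i = Some m ->
    L = mL m /\
    List.Forall2 (fun v t => subst s (qterm v) = subst s (mterm i t))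
                 vs (mts m).

Definition mgu q ms (s : var -> term F) : Prop :=
  unifier q ms s /\
  forall th, unifier q ms th -> exists r, forall x, th x = subst r (s x).

Definition unf_rule (q : cq Lname) (ms : seq (mapping Lname F VT))
    (s : var -> term F) : rule F VT :=
  Rule (map (fun x => subst s (qterm x)) (qhead q))
       (map (fun im : nat * mapping Lname F VT =>
               (mV im.2, map (fun z => s (im.1.+1, z)) (mzs im.2)))
            (zip (iota 0 (size ms)) ms)).

Definition generated (q : cq Lname) (M : seq (mapping Lname F VT))
    (r : rule F VT) : Prop :=
  exists ms s, List.Forall (fun m => List.In m M) ms /\ mgu q ms s /\
               r = unf_rule q ms s.

(* equality of rules up to a (bijective) renaming of variables;
   rule bodies are conjunctions, compared as sets of atoms *)
Definition ren (rho : var -> var) (t : term F) : term F :=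
  subst (fun v => TVar (rho v)) t.

Definition rule_equiv (r1 r2 : rule F VT) : Prop :=
  exists rho rho' : var -> var, cancel rho rho' /\ cancel rho' rho /\
    rhead r2 = map (ren rho) (rhead r1) /\
    forall a, List.In a (rbody r2) <->
              List.In a (map (fun a : VT * seq (term F) =>
                                (a.1, map (ren rho) a.2)) (rbody r1)).

(* Pi is the rule set of unf(q, M): a minimal (up to renaming) set of rules
   containing (up to renaming) every generated rule. *)
Definition is_unfolding (q : cq Lname) (M : seq (mapping Lname F VT))
    (Pi : seq (rule F VT)) : Prop :=
  (forall r, generated q M r -> exists r', List.In r' Pi /\ rule_equiv r r') /\
  (forall r', List.In r' Pi -> exists r, generated q M r /\ rule_equiv r r') /\
  (forall i j r1 r2, List.nth_error Pi i = Some r1 ->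
     List.nth_error Pi j = Some r2 -> rule_equiv r1 r2 -> i = j).

Definition head_sym (t : term F) : option F :=
  match t with TFun g _ => Some g | TVar _ => None end.
Definition atm (Pi : seq (rule F VT)) : seq (seq (option F)) :=
  map (fun r => map head_sym (rhead r)) Pi.

End Unfolding.

(* values: ground terms over constants (constants and objects f(c)) *)
Inductive val (F C : Type) :=
| VC (c : C)
| VF (g : F) (args : seq (val F C)).
Arguments VC {F C} c.

Fixpoint evalt (F C : Type) (nu : var -> C) (t : term F) : val F C :=
  match t with
  | TVar v => VC (nu v)
  | TFun g ts => VF g (map (evalt nu) ts)
  end.

Definition rule_ans (F VT C : Type) (ext : VT -> seq C -> Prop)
    (r : rule F VT) (t : seq (val F C)) : Prop :=
  exists nu : var -> C,
    (forall V ts, List.In (V, ts) (rbody r) ->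
       exists c, ext V c /\ map (evalt nu) ts = map VC c) /\
    t = map (evalt nu) (rhead r).

Definition prog_ans (F VT C : Type) (ext : VT -> seq C -> Prop)
    (Pi : seq (rule F VT)) (t : seq (val F C)) : Prop :=
  exists r, List.In r Pi /\ rule_ans ext r t.

Definition has_card (T : Type) (P : T -> Prop) (n : nat) : Prop :=
  exists s : seq T, List.NoDup s /\ (forall x, List.In x s <-> P x) /\ size s = n.

Section Wrap.
Variables (Lname F : eqType) (Vname : Type).

Definition signature := (Lname * seq (F * nat))%type.

Definition sign (m : mapping Lname F Vname) : signature :=
  (mL m, map (fun p => (p.1, size p.2)) (mts m)).

Fixpoint canon_ts (off : nat) (sh : seq (F * nat)) : seq (F * seq nat) :=
  match sh with
  | [::] => [::]
  | (g, k) :: sh' => (g, iota off k) :: canon_ts (off + k) sh'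
  end.

(* the single mapping L(f(v)) ~> W(v) of a signature; the fresh view W is
   named by the signature itself *)
Definition wrap_map (s : signature) : mapping Lname F signature :=
  Mapping s.1 (canon_ts 0 s.2) s (iota 0 (sumn (map snd s.2))).

Definition wrapM (M : seq (mapping Lname F Vname)) : seq (mapping Lname F signature) :=
  map wrap_map (undup (map sign M)).

(* extension of the fresh view W of signature s: the Datalog query
   (W(v), {W(v_i) <- V_i(z_i)}_i), v_i the arguments of the target terms *)
Definition wrap_ext (C : Type) (extD : Vname -> seq (seq C))
    (M : seq (mapping Lname F Vname)) (s : signature) (c : seq C) : Prop :=
  exists m, List.In m M /\ sign m = s /\
    exists nu : nat -> C, List.In (map nu (mzs m)) (extD (mV m)) /\
                          c = map nu (flatten (map snd (mts m))).

End Wrap.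

Definition base_ext (Vname C : Type) (extD : Vname -> seq (seq C))
  (V : Vname) (c : seq C) : Prop := List.In c (extD V).

Definition arity (Lname : Type) (isRole : Lname -> bool) (L : Lname) : nat :=
  if isRole L then 2 else 1.

Definition wf_mapping (Lname F VT : Type) (isRole : Lname -> bool)
    (m : mapping Lname F VT) : Prop :=
  size (mts m) = arity isRole (mL m) /\
  forall p, List.In p (mts m) -> forall y, List.In y p.2 -> List.In y (mzs m).

Definition wf_cq (Lname : Type) (isRole : Lname -> bool) (q : cq Lname) : Prop :=
  (forall L vs, List.In (L, vs) (qbody q) -> size vs = arity isRole L) /\
  (forall x, List.In x (qhead q) ->
     exists L vs, List.In (L, vs) (qbody q) /\ List.In x vs).

(* Main.v *)
Require Import Defs.
From mathcomp Require Import all_boot.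
From Stdlib Require List.
From Stdlib Require ClassicalEpsilon FunctionalExtensionality PropExtensionality.
Set Implicit Arguments.
Unset Strict Implicit.
Unset Printing Implicit Defensive.

Lemma Forall2_zip (A B : Type) (R : A -> B -> Prop) l1 l2 :
  List.Forall2 R l1 l2 <-> size l1 = size l2 /\ forall a b, List.In (a,b) (zip l1 l2) -> R a b.
Proof.
elim: l1 l2 => [|a l1 IH] [|b l2] /=; split.
- by [].
- by move=> _; constructor.
- by move=> H; inversion H.
- by case.
- by move=> H; inversion H.
- by case.
- move=> H; inversion H; subst. have [-> H2] := (IH l2).1 H5. split=> // a' b' [[<- <-]|] //. exact: H2.
- case=> [[Hs] H]. constructor; first by apply: H; left.
  apply/(IH l2); split=> // a' b' Hi; apply: H; by right.
Qed.

Lemma Forall2_in_left (A B : Type) (R : A -> B -> Prop) l1 l2 a :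
  List.Forall2 R l1 l2 -> List.In a l1 -> exists b, List.In b l2 /\ R a b.
Proof.
elim=> [|x y l1' l2' Hxy _ IH] //= [<-|Hi]; first by exists y; split=> //; left.
by have [b [Hb Rb]] := IH Hi; exists b; split=> //; right.
Qed.

Lemma Forall2_conj (A B : Type) (R1 R2 : A -> B -> Prop) l1 l2 :
  List.Forall2 R1 l1 l2 -> List.Forall2 R2 l1 l2 -> List.Forall2 (fun a b => R1 a b /\ R2 a b) l1 l2.
Proof.
elim=> [|x y l1' l2' H1 _ IH] H2; first by constructor.
inversion H2; subst; constructor; [split=> // | exact: IH].
Qed.

Lemma Forall2_impl_in (A B : Type) (R R' : A -> B -> Prop) l1 l2 :
  List.Forall2 R l1 l2 -> (forall a b, List.In b l2 -> R a b -> R' a b) -> List.Forall2 R' l1 l2.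
Proof.
elim=> [|x y l1' l2' H1 _ IH] H; constructor.
- by apply: H=> //; left.
- by apply: IH=> a b Hb; apply: H; right.
Qed.

Lemma Forall2_flip (A B : Type) (R : A -> B -> Prop) l1 l2 :
  List.Forall2 R l1 l2 -> List.Forall2 (fun b a => R a b) l2 l1.
Proof. by elim=> [|x y l1' l2' H1 _ IH]; constructor. Qed.

Lemma Forall2_compose (A B D : Type) (R1 : A -> B -> Prop) (R2 : B -> D -> Prop) (R : A -> D -> Prop) l1 l2 l3 :
  List.Forall2 R1 l1 l2 -> List.Forall2 R2 l2 l3 -> (forall a b c, R1 a b -> R2 b c -> R a c) ->
  List.Forall2 R l1 l3.
Proof.
move=> H; elim: H l3 => [|x y l1' l2' H1 _ IH] l3 H2 H; inversion H2; subst; constructor.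
- exact: H H1 _.
- exact: IH.
Qed.

Lemma nth_error_lt (A : Type) (l : seq A) i x : List.nth_error l i = Some x -> i < size l.
Proof. elim: l i => [|a l IH] [|i] //=. exact: IH. Qed.

Lemma nth_error_ex (A : Type) (l : seq A) i : i < size l -> exists x, List.nth_error l i = Some x.
Proof. elim: l i => [|a l IH] [|i] //=; first by exists a. exact: IH. Qed.

Lemma zip_iota_In (A : Type) (l : seq A) k i m :
  List.In (i, m) (zip (iota k (size l)) l) -> k <= i /\ List.nth_error l (i - k) = Some m.
Proof.
elim: l k => [|a l IH] k //= [E|H]; first by case: E => <- <-; rewrite subnn leqnn.
have [H1 H2] := IH _ H. split; first by apply: ltnW.
have -> : i - k = (i - k.+1).+1 by rewrite subnS prednK // subn_gt0.
exact: H2.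
Qed.

Lemma zip_iota_In0 (A : Type) (l : seq A) i m :
  List.In (i, m) (zip (iota 0 (size l)) l) -> List.nth_error l i = Some m.
Proof. by move=> H; have [_] := zip_iota_In H; rewrite subn0. Qed.

Lemma nth_error_zip_iota (A : Type) (l : seq A) k i m :
  List.nth_error l i = Some m -> List.In (k + i, m) (zip (iota k (size l)) l).
Proof.
elim: l k i => [|a l IH] k [|i] //=.
- by move=> [->]; left; rewrite addn0.
- by move=> H; right; rewrite addnS -addSn; apply: IH.
Qed.

Lemma Forall_nth (A : Type) (P : A -> Prop) l :
  (forall i x, List.nth_error l i = Some x -> P x) -> List.Forall P l.
Proof.
move=> H; apply/List.Forall_forall=> x Hx; have [i Hi] := List.In_nth_error _ _ Hx; exact: H Hi.
Qed.

Lemma choose_list (A X : Type) (P : nat -> A -> X -> Prop) (l : seq A) :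
  (forall i a, List.nth_error l i = Some a -> exists x, P i a x) ->
  exists xs : seq X, size xs = size l /\
    forall i a x, List.nth_error l i = Some a -> List.nth_error xs i = Some x -> P i a x.
Proof.
elim: l P => [|a l IH] P H; first by exists [::]; split=> // [] [].
have [x Hx] := H 0 a erefl.
have [xs [Hs Hxs]] := IH (fun i => P i.+1) (fun i b Hb => H i.+1 b Hb).
exists (x :: xs); split; first by rewrite /= Hs.
by move=> [|i] b y /= => [[<-] [<-]|]; [| apply: Hxs].
Qed.

Lemma cat_inj (A : Type) (a b c d : seq A) : size a = size c -> a ++ b = c ++ d -> a = c /\ b = d.
Proof.
move=> Hs H; have := congr1 (take (size a)) H; have := congr1 (drop (size a)) H.
by rewrite drop_size_cat // take_size_cat // Hs drop_size_cat // take_size_cat.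
Qed.

Lemma finite_card (A : Type) (P : A -> Prop) (l : seq A) :
  (forall x, P x -> List.In x l) -> exists n, has_card P n.
Proof.
move=> H.
have deq : forall x y : A, {x = y} + {x <> y} by move=> x y; apply: ClassicalEpsilon.excluded_middle_informative.
pose s := List.nodup deq (List.filter (fun x => if ClassicalEpsilon.excluded_middle_informative (P x) then true else false) l).
exists (size s), s; split; first exact: List.NoDup_nodup.
split; last by [].
move=> x; rewrite List.nodup_In List.filter_In.
case: ClassicalEpsilon.excluded_middle_informative => Px; split.
- by move=> _.
- by move=> ?; split=> //; apply: H.
- by case.
- by [].
Qed.

Lemma NoDup_flatten (A : Type) (ss : seq (seq A)) :
  (forall s, List.In s ss -> List.NoDup s) ->
  (forall i j si sj x, List.nth_error ss i = Some si -> List.nth_error ss j = Some sj ->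
     List.In x si -> List.In x sj -> i = j) -> List.NoDup (flatten ss).
Proof.
elim: ss => [|s ss IH] Hn Hd /=; first by constructor.
apply: List.NoDup_app.
- by apply: Hn; left.
- apply: IH; first by move=> s' Hs'; apply: Hn; right.
  by move=> i j si sj x Hi Hj H1 H2; have := Hd i.+1 j.+1 si sj x Hi Hj H1 H2 => -[].
- move=> a Ha Hf.
  have [s' [Hs' Ha']] : exists s', List.In s' ss /\ List.In a s'.
    by apply/List.in_concat.
  have [j Hj] := List.In_nth_error _ _ Hs'.
  by have := Hd 0 j.+1 s s' a erefl Hj Ha Ha'.
Qed.

Lemma In_flatten (A : Type) (ss : seq (seq A)) x :
  List.In x (flatten ss) <-> exists s, List.In s ss /\ List.In x s.
Proof. split; [exact: (proj1 (List.in_concat _ _)) | exact: (proj2 (List.in_concat _ _))]. Qed.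

Fixpoint allLists (A : Type) (V : seq A) (n : nat) : seq (seq A) :=
  match n with
  | 0 => [:: [::]]
  | n'.+1 => List.flat_map (fun x => map (cons x) (allLists V n')) V
  end.

Lemma allLists_In (A : Type) (V : seq A) (t : seq A) :
  (forall x, List.In x t -> List.In x V) -> List.In t (allLists V (size t)).
Proof.
elim: t => [|a t IH] H /=; first by left.
apply/List.in_flat_map; exists a; split; first by apply: H; left.
by apply: List.in_map; apply: IH => x Hx; apply: H; right.
Qed.

Section Terms.
Variables (F : Type).

Fixpoint term_ind2 (P : term F -> Prop) (HV : forall v, P (TVar v))
  (HF : forall g ts, List.Forall P ts -> P (TFun g ts)) (t : term F) : P t :=
  match t with
  | TVar v => HV v
  | TFun g ts => HF g ts ((fix go (l : seq (term F)) : List.Forall P l :=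
        match l with
        | nil => List.Forall_nil _
        | cons x l' => List.Forall_cons _ (term_ind2 HV HF x) (go l')
        end) ts)
  end.

Lemma map_ext_Forall (A B : Type) (f g : A -> B) l :
  List.Forall (fun x => f x = g x) l -> map f l = map g l.
Proof. by elim=> [|x l' H _ IH] //=; rewrite H IH. Qed.

Lemma evalt_ren (C : Type) (nu : var -> C) rho (t : term F) :
  evalt nu (ren rho t) = evalt (fun x => nu (rho x)) t.
Proof.
elim/term_ind2: t => [v|g ts IH] //=.
rewrite /ren /= -map_comp; congr VF; apply: map_ext_Forall.
by apply: List.Forall_impl IH => t; rewrite /ren.
Qed.

Lemma subst_mterm (s : var -> term F) i (p : F * seq nat) :
  subst s (mterm i p) = TFun p.1 (map (fun y => s (i.+1, y)) p.2).
Proof. by rewrite /mterm /= -map_comp. Qed.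

Lemma subst_qterm (s : var -> term F) v : subst s (qterm F v) = s (0, v).
Proof. by []. Qed.

Lemma evalt_subst_TFun (C : Type) (nu : var -> C) g ts :
  evalt nu (TFun g ts) = VF g (map (@evalt F C nu) ts).
Proof. by []. Qed.

End Terms.

Lemma rule_ans_equiv (F VT C : Type) (ext : VT -> seq C -> Prop) (r1 r2 : rule F VT) t :
  rule_equiv r1 r2 -> (rule_ans ext r1 t <-> rule_ans ext r2 t).
Proof.
move=> [rho [rho' [K1 [K2 [Hh Hb]]]]]; split.
- move=> [nu [Hbody ->]].
  have E : (fun x => nu (rho' (rho x))) = nu.
    by apply: FunctionalExtensionality.functional_extensionality => x; rewrite K1.
  exists (fun x => nu (rho' x)); split.
  + move=> V ts /Hb /List.in_map_iff [[V1 ts1] [[<- <-] Hin]].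
    have [c [Hc Hm]] := Hbody _ _ Hin.
    exists c; split=> //; rewrite -map_comp -Hm; apply: eq_map => x /=.
    by rewrite evalt_ren E.
  + rewrite Hh -map_comp; apply: eq_map => x /=; by rewrite evalt_ren E.
- move=> [nu [Hbody ->]].
  exists (fun x => nu (rho x)); split.
  + move=> V ts Hin.
    have Hin2 : List.In (V, map (ren rho) ts) (rbody r2).
      apply/Hb; apply/List.in_map_iff; by exists (V, ts).
    have [c [Hc Hm]] := Hbody _ _ Hin2.
    exists c; split=> //; rewrite -Hm -map_comp; apply: eq_map => x /=.
    by rewrite evalt_ren.
  + rewrite Hh -map_comp; apply: eq_map => x /=; by rewrite evalt_ren.
Qed.

Section Unf.
Variables (Lname F VT C : Type).

Definition GSP (ext : VT -> seq C -> Prop) (q : cq Lname) (ms : seq (mapping Lname F VT))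
   (nu : var -> C) (gq : nat -> Defs.val F C) (t : seq (Defs.val F C)) : Prop :=
   size ms = size (qbody q) /\
   (forall i L vs m, List.nth_error (qbody q) i = Some (L,vs) -> List.nth_error ms i = Some m ->
      L = mL m /\ List.Forall2 (fun v p => gq v = VF p.1 (map (fun y => VC (nu (i.+1,y))) p.2)) vs (mts m)) /\
   (forall i m, List.nth_error ms i = Some m -> ext (mV m) (map (fun z => nu (i.+1,z)) (mzs m))) /\
   t = map gq (qhead q).

Definition GS ext q ms t := exists nu gq, GSP ext q ms nu gq t.

Definition wfm (ms : seq (mapping Lname F VT)) := forall m, List.In m ms ->
  forall p, List.In p (mts m) -> forall y, List.In y p.2 -> List.In y (mzs m).

Definition head_occ (q : cq Lname) := forall x, List.In x (qhead q) ->
  exists L vs, List.In (L,vs) (qbody q) /\ List.In x vs.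

Lemma unf_body_In (q : cq Lname) (ms : seq (mapping Lname F VT)) (s : var -> term F) i m :
  List.nth_error ms i = Some m ->
  List.In (mV m, map (fun z => s (i.+1,z)) (mzs m)) (rbody (unf_rule q ms s)).
Proof.
move=> Hi /=; apply/List.in_map_iff; exists (i,m); split=> //.
by have := @nth_error_zip_iota _ ms 0 i m Hi; rewrite add0n.
Qed.

Lemma unf_GS ext q ms (s : var -> term F) t :
  unifier q ms s -> wfm ms -> rule_ans ext (unf_rule q ms s) t -> GS ext q ms t.
Proof.
move=> [Hsz Hu] Hwf [nu [Hbody Ht]].
pose nu' w := match evalt nu (s w) with VC c => c | _ => nu w end.
have K : forall i m z, List.nth_error ms i = Some m -> List.In z (mzs m) ->
    evalt nu (s (i.+1,z)) = VC (nu' (i.+1,z)).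
  move=> i m z Hi Hz.
  have [c [_ Hc]] := Hbody _ _ (unf_body_In q s Hi).
  have : List.In (evalt nu (s (i.+1,z))) (map VC c).
    rewrite -Hc -map_comp. exact: (List.in_map (fun z => evalt nu (s (i.+1,z)))).
  move/List.in_map_iff=> [c' [E _]]. by rewrite /nu' -E.
exists nu', (fun x => evalt nu (s (0,x))); split=> //; split; [|split].
- move=> i L vs m Hq Hm. have [HL HF] := Hu _ _ _ _ Hq Hm. split=> //.
  refine (Forall2_impl_in HF _) => v p Hp. rewrite subst_qterm subst_mterm => ->.
  rewrite evalt_subst_TFun -map_comp; congr VF; apply: List.map_ext_in => y Hy /=.
  exact: (K _ _ _ Hm (Hwf m (List.nth_error_In _ _ Hm) p Hp y Hy)).
- move=> i m Hm.
  have [c [Hc Hm2]] := Hbody _ _ (unf_body_In q s Hm).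
  suff -> : map (fun z => nu' (i.+1, z)) (mzs m) = c by [].
  apply: (@inj_map _ _ (@VC F C)); first by move=> ? ? [].
  rewrite -Hm2 -!map_comp; apply: List.map_ext_in => z Hz /=.
  by rewrite (K _ _ _ Hm Hz).
- by rewrite Ht /= -map_comp.
Qed.

Fixpoint encV (e : C -> var) (x : Defs.val F C) : term F :=
  match x with VC c => TVar (e c) | VF g vs => TFun g (map (encV e) vs) end.

Lemma GS_unifier ext q ms nu gq t :
  GSP ext q ms nu gq t ->
  exists th, unifier q ms th /\ forall w, w.1 <> 0 -> exists u, th w = TVar u /\ nu u = nu w.
Proof.
move=> [Hsz [Hf _]].
pose encC c := ClassicalEpsilon.epsilon (inhabits (0,0)) (fun w => nu w = c).
pose th (w : var) := if w.1 is 0 then encV encC (gq w.2) else TVar (encC (nu w)).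
exists th; split.
- split=> // i L vs m Hq Hm; have [HL HF] := Hf _ _ _ _ Hq Hm; split=> //.
  apply: List.Forall2_impl HF => v p E.
  rewrite subst_qterm subst_mterm /th /= E /= -map_comp; by [].
- move=> [[|k] y] //= _; exists (encC (nu (k.+1,y))); split=> //.
  by apply: (ClassicalEpsilon.epsilon_spec (inhabits (0,0)) (fun w => nu w = nu (k.+1,y))); exists (k.+1,y).
Qed.

Section Mgu.
Variables (q : cq Lname) (ms : seq (mapping Lname F VT)) (th0 : var -> term F).
Hypothesis H0 : unifier q ms th0.

Definition eqv (w1 w2 : var) := forall th, unifier q ms th -> th w1 = th w2.
Definition rep (w : var) := ClassicalEpsilon.epsilon (inhabits (0,0)) (fun u => eqv u w).

Lemma rep_eqv w : eqv (rep w) w.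
Proof. by apply: (ClassicalEpsilon.epsilon_spec (inhabits (0,0)) (fun u => eqv u w)); exists w. Qed.

Lemma rep_eq w1 w2 : eqv w1 w2 -> rep w1 = rep w2.
Proof.
move=> H; rewrite /rep.
have -> : (fun u => eqv u w1) = (fun u => eqv u w2) => //.
apply: FunctionalExtensionality.functional_extensionality => u.
apply: PropExtensionality.propositional_extensionality; split=> H1 th Ht.
- by rewrite (H1 th Ht) (H th Ht).
- by rewrite (H1 th Ht) (H th Ht).
Qed.

Definition Qo x (T : term F) := exists i L vs m p,
  List.nth_error (qbody q) i = Some (L,vs) /\ List.nth_error ms i = Some m /\
  List.In (x,p) (zip vs (mts m)) /\ T = TFun p.1 (map (fun y => TVar (rep (i.+1,y))) p.2).

Definition smgu (w : var) : term F :=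
  if w.1 is 0 then
    (if ClassicalEpsilon.excluded_middle_informative (exists T, Qo w.2 T)
     then ClassicalEpsilon.epsilon (inhabits (TVar (0,0))) (Qo w.2) else TVar (rep w))
  else TVar (rep w).

Lemma unif_occ th i L vs m x p : unifier q ms th ->
  List.nth_error (qbody q) i = Some (L,vs) -> List.nth_error ms i = Some m ->
  List.In (x,p) (zip vs (mts m)) -> th (0,x) = TFun p.1 (map (fun y => th (i.+1,y)) p.2).
Proof.
move=> [_ Hu] Hq Hm Hin; have [_ HF] := Hu _ _ _ _ Hq Hm.
have [_ Hz] := (proj1 (Forall2_zip _ _ _)) HF.
by have := Hz _ _ Hin; rewrite subst_qterm subst_mterm.
Qed.

Lemma rep_map (f1 f2 : nat -> var) l1 l2 :
  (forall th, unifier q ms th -> map (fun y => th (f1 y)) l1 = map (fun y => th (f2 y)) l2) ->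
  map (fun y => TVar (rep (f1 y))) l1 = map (fun y => TVar (rep (f2 y))) l2 :> seq (term F).
Proof.
elim: l1 l2 => [|a l1 IH] [|b l2] H //.
- by have := H th0 H0.
- by have := H th0 H0.
- rewrite /= (rep_eq (w1 := f1 a) (w2 := f2 b)).
  + by rewrite (IH l2) // => th Ht; have := H th Ht => -[].
  + by move=> th Ht; have := H th Ht => -[].
Qed.

Lemma Qo_uniq x T1 T2 : Qo x T1 -> Qo x T2 -> T1 = T2.
Proof.
move=> [i1 [L1 [vs1 [m1 [p1 [Hq1 [Hm1 [Hi1 ->]]]]]]]] [i2 [L2 [vs2 [m2 [p2 [Hq2 [Hm2 [Hi2 ->]]]]]]]].
have E : forall th, unifier q ms th ->
   TFun p1.1 (map (fun y => th (i1.+1,y)) p1.2) = TFun p2.1 (map (fun y => th (i2.+1,y)) p2.2).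
  by move=> th Ht; rewrite -(unif_occ Ht Hq1 Hm1 Hi1) -(unif_occ Ht Hq2 Hm2 Hi2).
have [-> _] := E th0 H0 => //.
have [_ E0] := E th0 H0.
congr TFun; apply: (rep_map (f1 := fun y => (i1.+1,y)) (f2 := fun y => (i2.+1,y))).
by move=> th Ht; have [] := E th Ht.
Qed.

Lemma smgu_unifier : unifier q ms smgu.
Proof.
have [Hsz Hu] := H0; split=> // i L vs m Hq Hm.
have [HL HF] := Hu _ _ _ _ Hq Hm; split=> //.
have [Hs _] := (proj1 (Forall2_zip _ _ _)) HF.
apply/Forall2_zip; split=> // v p Hin.
rewrite subst_qterm subst_mterm.
have HQ : Qo v (TFun p.1 (map (fun y => TVar (rep (i.+1,y))) p.2)).
  by exists i, L, vs, m, p.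
rewrite /smgu /=; case: ClassicalEpsilon.excluded_middle_informative => Hex; last by exfalso; apply: Hex; eexists; exact: HQ.
apply: Qo_uniq (ClassicalEpsilon.epsilon_spec _ _ Hex) _.
by [].
Qed.

Lemma smgu_mgu : mgu q ms smgu.
Proof.
split; first exact: smgu_unifier.
move=> th Ht; exists th => -[[|k] y]; last by rewrite /smgu /= (rep_eqv _ Ht).
rewrite /smgu /=; case: ClassicalEpsilon.excluded_middle_informative => Hex; last by rewrite /= (rep_eqv _ Ht).
have := ClassicalEpsilon.epsilon_spec (inhabits (TVar (0,0))) _ Hex.
move: (ClassicalEpsilon.epsilon _ _) => T [i [L [vs [m [p [Hq [Hm [Hi ->]]]]]]]].
rewrite (unif_occ Ht Hq Hm Hi) /= -map_comp; congr TFun; apply: eq_map => z /=.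
by rewrite (rep_eqv _ Ht).
Qed.

End Mgu.

Lemma mgu_exists (q : cq Lname) (ms : seq (mapping Lname F VT)) (th0 : var -> term F) : unifier q ms th0 -> exists s, mgu q ms s.
Proof. by move=> H; exists (smgu q ms); apply: smgu_mgu H. Qed.

Lemma mgu_rule_ans (ext : VT -> seq C -> Prop) (q : cq Lname) (ms : seq (mapping Lname F VT)) (s : var -> term F) nu gq t :
  mgu q ms s -> GSP ext q ms nu gq t -> head_occ q -> rule_ans ext (unf_rule q ms s) t.
Proof.
move=> [Hs Hmg] HG Hocc.
have [th [Hth Hthv]] := GS_unifier HG.
have [r Hr] := Hmg th Hth.
have [Hsz [Hf [Hb Ht]]] := HG.
pose nu2 w := match r w with TVar u => nu u | _ => nu w end.
have K : forall w, w.1 <> 0 -> evalt nu2 (s w) = VC (nu w).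
  move=> w Hw; have [u [E1 E2]] := Hthv w Hw.
  move: (Hr w); rewrite E1; case: (s w) => [w'|g ts] //= E.
  by rewrite /nu2 -E E2.
exists nu2; split.
- move=> V ts /List.in_map_iff [[i m] [[<- <-] Hin]] /=.
  have Hm := zip_iota_In0 Hin.
  exists (map (fun z => nu (i.+1,z)) (mzs m)); split; first exact: Hb.
  by rewrite -!map_comp; apply: eq_map => z /=; rewrite K.
- rewrite Ht /= -map_comp; apply: List.map_ext_in => x Hx /=.
  have [L [vs [Hin Hxv]]] := Hocc x Hx.
  have [i Hq] := List.In_nth_error _ _ Hin.
  have [m Hm] : exists m, List.nth_error ms i = Some m.
    by apply: nth_error_ex; rewrite Hsz; apply: nth_error_lt Hq.
  have [_ HF1] := Hf _ _ _ _ Hq Hm.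
  have [_ HF2] := (proj2 Hs) _ _ _ _ Hq Hm.
  have [p [_ [E1 E2]]] := Forall2_in_left (Forall2_conj HF1 HF2) Hxv.
  rewrite subst_qterm subst_mterm in E2.
  rewrite E2 E1 /= -map_comp; congr VF; apply: eq_map => y /=.
  by rewrite K.
Qed.

End Unf.

Section PiLemmas.
Variables (Lname F VT C : Type).

Lemma Pi_fwd (ext : VT -> seq C -> Prop) (q : cq Lname) (Ms : seq (mapping Lname F VT)) Pi r t :
  is_unfolding q Ms Pi -> wfm Ms -> List.In r Pi -> rule_ans ext r t ->
  exists ms, List.Forall (fun m => List.In m Ms) ms /\ GS ext q ms t.
Proof.
move=> [_ [H2 _]] Hwf Hr Ha.
have [r0 [[ms [s [Hms [Hmgu E]]]] Heq]] := H2 r Hr.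
have Ha0 := (proj2 (rule_ans_equiv ext t Heq)) Ha.
exists ms; split=> //.
apply: (unf_GS (s := s)); first exact: proj1 Hmgu.
- move=> m Hm; apply: Hwf; exact: (proj1 (List.Forall_forall _ _) Hms m Hm).
- by rewrite -E.
Qed.

Lemma Pi_bwd (ext : VT -> seq C -> Prop) (q : cq Lname) (Ms : seq (mapping Lname F VT)) Pi ms t :
  is_unfolding q Ms Pi -> head_occ q -> List.Forall (fun m => List.In m Ms) ms -> GS ext q ms t ->
  prog_ans ext Pi t.
Proof.
move=> [H1 _] Hocc Hms [nu [gq HG]].
have [th [Hth _]] := GS_unifier HG.
have [s Hs] := mgu_exists Hth.
have [r' [Hr' Heq]] := H1 (unf_rule q ms s) (ex_intro _ ms (ex_intro _ s (conj Hms (conj Hs erefl)))).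
exists r'; split=> //.
apply: (proj1 (rule_ans_equiv ext t Heq)).
exact: mgu_rule_ans Hs HG Hocc.
Qed.

End PiLemmas.

Lemma In_mem (T : eqType) (x : T) s : List.In x s <-> x \in s.
Proof.
elim: s => [|a s IH] //=; rewrite in_cons; split.
- by move=> [->|/IH ->]; rewrite ?eqxx ?orbT.
- by case/orP=> [/eqP ->|/IH]; [left|right].
Qed.

Lemma nth_error_map' (A B : Type) (f : A -> B) (l : seq A) i :
  List.nth_error (map f l) i = option_map f (List.nth_error l i).
Proof. by elim: l i => [|a l IH] [|i] //=. Qed.

Lemma nth_error_map_inv (A B : Type) (f : A -> B) (l : seq A) i y :
  List.nth_error (map f l) i = Some y -> exists x, List.nth_error l i = Some x /\ y = f x.
Proof. rewrite nth_error_map'; case: (List.nth_error l i) => //= x [<-]; by exists x. Qed.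

Lemma my_map_nth_iota (A : Type) (L : seq A) (d : nat -> A) :
  map (fun k => nth (d k) L k) (iota 0 (size L)) = L.
Proof.
case: L => [|a L'] //; set L := a :: L'.
apply: (@eq_from_nth _ a); first by rewrite size_map size_iota.
move=> i; rewrite size_map size_iota => Hi.
by rewrite (nth_map 0) ?size_iota // nth_iota // add0n (set_nth_default a).
Qed.

Section Wrap.
Variables (Lname F : eqType) (Vname C : Type).

Definition shp (P : seq (F * seq nat)) := map (fun p => (p.1, size p.2)) P.

Lemma canon_lemma (P : seq (F * seq nat)) off (h g : nat -> C) :
  map h (iota off (sumn (map snd (shp P)))) = map g (flatten (map snd P)) ->
  List.Forall2 (fun p' p => p'.1 = p.1 /\ map h p'.2 = map g p.2) (canon_ts off (shp P)) P.
Proof.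
elim: P off => [|[f ys] P IH] off /= H; first by constructor.
rewrite iotaD map_cat map_cat in H.
have Hs : size (map h (iota off (size ys))) = size (map g ys) by rewrite !size_map size_iota.
have [E1 E2] := cat_inj Hs H.
constructor; first by split.
exact: IH E2.
Qed.

Lemma canon_in off (sh : seq (F * nat)) p y : List.In p (canon_ts off sh) -> List.In y p.2 ->
  off <= y < off + sumn (map snd sh).
Proof.
elim: sh off => [|[g k] sh IH] off //= [<-|Hp] Hy.
- move/In_mem: Hy; rewrite mem_iota => /andP [H1 H2].
  by rewrite H1 /= (leq_trans H2) // leq_add2l leq_addr.
- have /andP [H1 H2] := IH _ Hp Hy.
  rewrite (leq_trans _ H1) ?leq_addr //= -addnA in H2 *.
  by [].
Qed.

Lemma wfm_wrap (M : seq (mapping Lname F Vname)) : wfm (wrapM M).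
Proof.
move=> m /List.in_map_iff [s [<- _]] p Hp y Hy /=.
apply/In_mem; rewrite mem_iota add0n.
by have := canon_in Hp Hy.
Qed.

Lemma In_wrapM (M : seq (mapping Lname F Vname)) m :
  List.In m M -> List.In (wrap_map (sign m)) (wrapM M).
Proof.
move=> Hm; apply: List.in_map; apply/In_mem; rewrite mem_undup.
by apply/In_mem; apply: List.in_map.
Qed.

Lemma wrapM_shape (M : seq (mapping Lname F Vname)) m :
  List.In m (wrapM M) -> m = wrap_map (mV m).
Proof. by move=> /List.in_map_iff [s [<- _]]. Qed.

End Wrap.

Section WrapGS.
Variables (Lname F : eqType) (Vname C : Type).
Variables (M : seq (mapping Lname F Vname)) (extD : Vname -> seq (seq C)) (q : cq Lname).

Lemma sumn_shape (P : seq (F * seq nat)) :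
  sumn (map snd (shp P)) = size (flatten (map snd P)).
Proof. by rewrite size_flatten /shp /shape -!map_comp. Qed.

Lemma C_fwd ms t :
  List.Forall (fun m => List.In m M) ms -> GS (base_ext extD) q ms t ->
  exists ms', List.Forall (fun m => List.In m (wrapM M)) ms' /\ GS (wrap_ext extD M) q ms' t.
Proof.
move=> Hms [nu [gq [Hsz [Hf [Hb Ht]]]]].
exists (map (fun m => wrap_map (sign m)) ms); split.
  apply/List.Forall_forall => m' /List.in_map_iff [m [<- Hm]].
  apply: In_wrapM; exact: (proj1 (List.Forall_forall _ _) Hms m Hm).
pose nu' (w : var) := match w with
  | (0, _) => nu w
  | (i.+1, k) => match List.nth_error ms i with
                 | Some m => nth (nu w) (map (fun y => nu (i.+1,y)) (flatten (map snd (mts m)))) k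
                 | None => nu w end end.
have HG : forall i m, List.nth_error ms i = Some m ->
   map (fun k => nu' (i.+1,k)) (iota 0 (sumn (map snd (shp (mts m))))) =
   map (fun y => nu (i.+1,y)) (flatten (map snd (mts m))).
  move=> i m Hm; rewrite sumn_shape /nu' Hm.
  have := my_map_nth_iota (map (fun y => nu (i.+1,y)) (flatten (map snd (mts m)))) (fun k => nu (i.+1,k)).
  by rewrite size_map.
exists nu', gq; split; first by rewrite size_map.
split; [|split] => //.
- move=> i L vs m' Hq Hm'; have [m [Hm E']] := nth_error_map_inv Hm'; subst m'.
  have [HL HF] := Hf _ _ _ _ Hq Hm; split=> //.
  have HC := canon_lemma (HG i m Hm).
  apply: (Forall2_compose HF (Forall2_flip HC)) => v p p' E [E1 E2].
  rewrite E E1; congr VF; have := congr1 (map (@VC F C)) E2; rewrite -!map_comp => H.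
  by symmetry; exact: H.
- move=> i m' Hm'; have [m [Hm E']] := nth_error_map_inv Hm'; subst m' => /=.
  exists m; split; first exact: (proj1 (List.Forall_forall _ _) Hms m (List.nth_error_In _ _ Hm)).
  split=> //; exists (fun y => nu (i.+1,y)); split; first exact: Hb Hm.
  exact: HG.
Qed.

Lemma C_bwd ms' t :
  List.Forall (fun m => List.In m (wrapM M)) ms' -> GS (wrap_ext extD M) q ms' t ->
  exists ms, List.Forall (fun m => List.In m M) ms /\ GS (base_ext extD) q ms t.
Proof.
move=> Hms' [nu' [gq [Hsz [Hf [Hb Ht]]]]].
have Hin' : forall i m', List.nth_error ms' i = Some m' -> List.In m' (wrapM M).
  by move=> i m' Hi; apply: (proj1 (List.Forall_forall _ _) Hms'); apply: List.nth_error_In Hi.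
pose P (i : nat) (m' : mapping Lname F (signature Lname F)) (x : mapping Lname F Vname * (nat -> C)) :=
  List.In x.1 M /\ sign x.1 = mV m' /\ List.In (map x.2 (mzs x.1)) (extD (mV x.1)) /\
  map (fun k => nu' (i.+1,k)) (mzs m') = map x.2 (flatten (map snd (mts x.1))).
have [xs [Hxsz Hxs]] : exists xs : seq (mapping Lname F Vname * (nat -> C)), size xs = size ms' /\
    forall i m' x, List.nth_error ms' i = Some m' -> List.nth_error xs i = Some x -> P i m' x.
  apply: choose_list => i m' Hi.
  have [m [HmM [Hsg [f [Hf1 Hf2]]]]] := Hb i m' Hi.
  by exists (m, f); split=> //.
pose nu (w : var) := match w with
  | (0, _) => nu' w
  | (i.+1, y) => match List.nth_error xs i with Some x => x.2 y | None => nu' w end end.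
have Hget : forall i m, List.nth_error (map fst xs) i = Some m ->
    exists m' f, List.nth_error ms' i = Some m' /\ List.nth_error xs i = Some (m, f) /\ P i m' (m, f).
  move=> i m Hm0; have [[m0 f] [Hx /= E]] := nth_error_map_inv Hm0; subst m0.
  have [m' Hm'] : exists m', List.nth_error ms' i = Some m'.
    by apply: nth_error_ex; rewrite -Hxsz; apply: nth_error_lt Hx.
  by exists m', f; split=> //; split=> //; apply: Hxs Hm' Hx.
exists (map fst xs); split.
  apply: Forall_nth => i m Hm; have [m' [f [_ [_ [H _]]]]] := Hget i m Hm; exact: H.
exists nu, gq; split; first by rewrite size_map Hxsz.
split; [|split] => //.
- move=> i L vs m Hq Hm.
  have [m' [f [Hm' [Hx [HmM [Hsg [Hext Heq]]]]]]] := Hget i m Hm.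
  have Enu : forall y, nu (i.+1,y) = f y by move=> y; rewrite /nu Hx.
  have [HL HF] := Hf _ _ _ _ Hq Hm'.
  have Ew : m' = wrap_map (sign m) by rewrite Hsg; apply: wrapM_shape (Hin' _ _ Hm').
  rewrite Ew in HL HF Heq; split; first by rewrite HL.
  have HC := canon_lemma Heq.
  apply: (Forall2_compose HF HC) => v p' p E [E1 E2].
  rewrite E E1; congr VF; have := congr1 (map (@VC F C)) E2; rewrite -!map_comp => H.
  transitivity (map (@VC F C \o (m, f).2) p.2); first exact: H.
  by apply: eq_map => y /=; rewrite /nu Hx.
- move=> i m Hm.
  have [m' [f [Hm' [Hx [HmM [Hsg [Hext Heq]]]]]]] := Hget i m Hm.
  have -> : map (fun z => nu (i.+1,z)) (mzs m) = map f (mzs m).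
    by apply: eq_map => z; rewrite /nu Hx.
  exact: Hext.
Qed.

End WrapGS.

Definition vsym (F C : Type) (v : Defs.val F C) : option F :=
  match v with VC _ => None | VF g _ => Some g end.

Lemma row_ans (F VT C : Type) (ext : VT -> seq C -> Prop) (r : rule F VT) x :
  rule_ans ext r x -> map (@head_sym F) (rhead r) = map (@vsym F C) x.
Proof.
move=> [nu [_ ->]]; rewrite -map_comp; apply: eq_map => -[v|g ts] //.
Qed.

Definition vfun (Lname F VT C : Type) (m : mapping Lname F VT) (c : seq C) (p : F * seq nat) : Defs.val F C :=
  match c with
  | [::] => VF p.1 [::]
  | c0 :: _ => VF p.1 (map (fun y => VC (nth c0 c (index y (mzs m)))) p.2)
  end.

Lemma nth_index_map (C : Type) (g : nat -> C) (l : seq nat) d y :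
  y \in l -> nth d (map g l) (index y l) = g y.
Proof. by move=> Hy; rewrite (nth_map y) ?index_mem // nth_index. Qed.

Lemma vfun_ok (Lname F VT C : Type) (m : mapping Lname F VT) (g : nat -> C) p :
  (forall y, List.In y p.2 -> List.In y (mzs m)) ->
  vfun m (map g (mzs m)) p = VF p.1 (map (fun y => VC (g y)) p.2).
Proof.
rewrite /vfun; case E: (mzs m) => [|z zs] H.
- by case: p H => f [|y ys] //= H; have := H y (or_introl erefl).
- congr VF; apply: List.map_ext_in => y Hy; congr VC.
  rewrite -E nth_index_map //; apply/In_mem; rewrite E; exact: H y Hy.
Qed.

Unset Implicit Arguments.
Set Strict Implicit.

Theorem theorem6 (Lname F : eqType) (Vname C : Type)
    (isRole : Lname -> bool)
    (M : seq (mapping Lname F Vname))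
    (extD : Vname -> seq (seq C))
    (q : cq Lname)
    (PiM : seq (rule F Vname))
    (PiW : seq (rule F (signature Lname F))) :
  (forall m, List.In m M -> wf_mapping isRole m) ->
  wf_cq isRole q ->
  is_unfolding q M PiM ->
  is_unfolding q (wrapM M) PiW ->
  List.NoDup (atm PiW) ->
  exists ns : seq nat,
    size ns = size PiW /\
    (forall i r n, List.nth_error PiW i = Some r -> List.nth_error ns i = Some n ->
       has_card (rule_ans (wrap_ext extD M) r) n) /\
    has_card (prog_ans (base_ext extD) PiM) (sumn ns).
Proof.
move=> Hwf [_ Hocc] HM HW Hnd.
have wfM : wfm M by move=> m Hm; have [_ H] := Hwf m Hm.
have wfW := @wfm_wrap _ _ Vname M.
have EQ : forall t, prog_ans (base_ext extD) PiM t <->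
    exists r, List.In r PiW /\ rule_ans (wrap_ext extD M) r t.
  move=> t; split.
  - move=> [r [Hr Ha]].
    have [ms [Hms HG]] := Pi_fwd HM wfM Hr Ha.
    have [ms' [Hms' HG']] := C_fwd Hms HG.
    exact: Pi_bwd HW Hocc Hms' HG'.
  - move=> [r [Hr Ha]].
    have [ms' [Hms' HG']] := Pi_fwd HW wfW Hr Ha.
    have [ms [Hms HG]] := C_bwd Hms' HG'.
    exact: Pi_bwd HM Hocc Hms HG.
pose Vals := List.flat_map (fun m => List.flat_map (fun c => map (@vfun _ _ _ C m c) (mts m)) (extD (mV m))) M.
have Sup : forall r t, List.In r PiW -> rule_ans (wrap_ext extD M) r t ->
    List.In t (allLists Vals (size (qhead q))).
  move=> r t Hr Ha.
  have [ms' [Hms' HG']] := Pi_fwd HW wfW Hr Ha.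
  have [ms [Hms [nu [gq [Hsz [Hf [Hb Ht]]]]]]] := C_bwd Hms' HG'.
  have -> : size (qhead q) = size t by rewrite Ht size_map.
  apply: allLists_In => x; rewrite Ht => /List.in_map_iff [y [<- Hy]].
  have [L [vs [Hin Hyv]]] := Hocc y Hy.
  have [i Hq] := List.In_nth_error _ _ Hin.
  have [m Hm] : exists m, List.nth_error ms i = Some m.
    by apply: nth_error_ex; rewrite Hsz; apply: nth_error_lt Hq.
  have [_ HF] := Hf _ _ _ _ Hq Hm.
  have [p [Hp E]] := Forall2_in_left HF Hyv.
  have HmM : List.In m M := proj1 (List.Forall_forall _ _) Hms m (List.nth_error_In _ _ Hm).
  apply/List.in_flat_map; exists m; split=> //.
  apply/List.in_flat_map; exists (map (fun z => nu (i.+1,z)) (mzs m)); split; first exact: Hb Hm.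
  apply/List.in_map_iff; exists p; split=> //.
  rewrite E (@vfun_ok _ _ _ _ m (fun z => nu (i.+1,z)) p) //.
  exact: wfM HmM p Hp.
pose P (i : nat) (r : rule F (signature Lname F)) (s : seq (seq (Defs.val F C))) :=
  List.NoDup s /\ forall x, List.In x s <-> rule_ans (wrap_ext extD M) r x.
have [ss [Hssz Hss]] : exists ss : seq (seq (seq (Defs.val F C))), size ss = size PiW /\
    forall i r s, List.nth_error PiW i = Some r -> List.nth_error ss i = Some s -> P i r s.
  apply: choose_list => i r Hr.
  have [n [s [H1 [H2 _]]]] := finite_card (Sup r^~ (List.nth_error_In _ _ Hr)).
  by exists s; split.
have Hget : forall i s, List.nth_error ss i = Some s ->
    exists r, List.nth_error PiW i = Some r /\ P i r s.
  move=> i s Hs.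
  have [r Hr] : exists r, List.nth_error PiW i = Some r.
    by apply: nth_error_ex; rewrite -Hssz; apply: nth_error_lt Hs.
  by exists r; split=> //; apply: Hss Hr Hs.
exists (map size ss); split; first by rewrite size_map.
split.
- move=> i r n Hr Hn.
  have [s [Hs ->]] := nth_error_map_inv Hn.
  have [H1 H2] := Hss _ _ _ Hr Hs.
  by exists s.
- exists (flatten ss); split; [|split].
  + apply: NoDup_flatten.
    * move=> s Hs; have [i Hi] := List.In_nth_error _ _ Hs.
      by have [r [_ [H1 _]]] := Hget i s Hi.
    * move=> i j si sj x Hi Hj Hxi Hxj.
      have [ri [Hri [_ Hi2]]] := Hget i si Hi.
      have [rj [Hrj [_ Hj2]]] := Hget j sj Hj.
      have Ei := row_ans (proj1 (Hi2 x) Hxi).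
      have Ej := row_ans (proj1 (Hj2 x) Hxj).
      have Ai : List.nth_error (atm PiW) i = Some (map (@head_sym _) (rhead ri)).
        by rewrite /atm nth_error_map' Hri.
      have Aj : List.nth_error (atm PiW) j = Some (map (@head_sym _) (rhead rj)).
        by rewrite /atm nth_error_map' Hrj.
      apply: (proj1 (List.NoDup_nth_error _) Hnd).
      * by apply/ltP; apply: nth_error_lt Ai.
      * by rewrite Ai Aj Ei Ej.
  + move=> x; rewrite EQ; split.
    * move/In_flatten => [s [Hs Hx]].
      have [i Hi] := List.In_nth_error _ _ Hs.
      have [r [Hr [_ H2]]] := Hget i s Hi.
      exists r; split; [exact: List.nth_error_In Hr | exact: (proj1 (H2 x))].
    * move=> [r [Hr Ha]].
      have [i Hi] := List.In_nth_error _ _ Hr.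
      have [s Hs] : exists s, List.nth_error ss i = Some s.
        by apply: nth_error_ex; rewrite Hssz; apply: nth_error_lt Hi.
      have [_ H2] := Hss _ _ _ Hi Hs.
      apply/In_flatten; exists s; split; [exact: List.nth_error_In Hs | exact: (proj2 (H2 x))].
  + by rewrite size_flatten.
Qed.
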